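(* Let $m>2$ be an integer and let $q$ be a prime power with $(m-1)\mid(q-1)$ and $m\mid(q-1)$. Let $n=1+\frac{q-1}{m}$. Then $|C_m+C_n|\le q-1$. In particular, not every element of $\mathbb{F}_q$ is the sum of an $m$-potent and an $n$-potent.
   Context: For a prime power $q$ and an integer $k>1$, an element $a\in\mathbb{F}_q$ is called a $k$-potent if $a^k=a$, and $C_k$ denotes the set of all $k$-potents in $\mathbb{F}_q$. For sets $A,B\subseteq\mathbb{F}_q$, $A+B=\{a+b:a\in A,b\in B\}$. *)

(* Defs.v *)
From mathcomp Require Import all_boot all_order all_algebra all_field.
Set Implicit Arguments. Unset Strict Implicit. Unset Printing Implicit Defensive.
Import GRing.Theory.
Local Open Scope ring_scope.

Definition kpotents (F : finFieldType) (k : nat) : {set F} :=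
  [set a : F | a ^+ k == a].

Definition sumset (F : finFieldType) (A B : {set F}) : {set F} :=
  [set a + b | a in A, b in B].

(* Main.v *)
Require Import Defs.
From mathcomp Require Import all_boot all_order all_algebra all_field.
From mathcomp Require Import all_fingroup all_solvable.
Import GRing.Theory.
Local Open Scope ring_scope.

Lemma kpot_card (F : finFieldType) k : (1 < k)%N -> (#|kpotents F k| <= k)%N.
Proof.
move=> k1.
have sp : size ('X^k - 'X : {poly F}) = k.+1.
  rewrite size_polyDl ?size_polyXn // size_polyN size_polyX; by [].
have p0 : ('X^k - 'X : {poly F}) != 0 by rewrite -size_poly_eq0 sp.
have := max_poly_roots p0 _ (enum_uniq (mem (kpotents F k))).
rewrite sp cardE; apply.
apply/allP => x; rewrite mem_enum inE => /eqP hx.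
by rewrite /root !hornerE hx subrr.
Qed.

Theorem mainTheorem6 (F : finFieldType) (q m : nat) :
  #|F| = q -> (2 < m)%N -> (m.-1 %| q.-1)%N -> (m %| q.-1)%N ->
  let n := (1 + q.-1 %/ m)%N in
  (#|sumset (kpotents F m) (kpotents F n)| <= q.-1)%N /\
  exists x : F, x \notin sumset (kpotents F m) (kpotents F n).
Proof.
move=> hq m2 dm1 dm n.
have q2 : (1 < q)%N.
  rewrite -hq; apply/card_gt1P; exists 0, 1; by split => //; rewrite eq_sym oner_neq0.
have qpos : (0 < q.-1)%N by move: q2; case: (q) => [|[]].
have mm1 : (m * m.-1 %| q.-1)%N.
  rewrite Gauss_dvd ?dm ?dm1 //.
  by move: m2; case: (m) => // m' _; rewrite coprimeSn.
have dt : (m.-1 %| q.-1 %/ m)%N by rewrite dvdn_divRL // mulnC.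
have nm1 : n.-1 = (q.-1 %/ m)%N by rewrite /n add1n.
have qm : (m * n.-1)%N = q.-1 by rewrite nm1 mulnC divnK.
have n1 : (1 < n)%N.
  rewrite /n add1n ltnS divn_gt0; last by move: m2; case: (m).
  exact: dvdn_leq.
set A := kpotents F m; set B := kpotents F n.
have AB : A \subset B.
  apply/subsetP => x; rewrite !inE => /eqP hx.
  have [->|x0] := eqVneq x 0; first by rewrite expr0n; move: n1; case: (n).
  have hx1 : x ^+ m.-1 = 1.
    apply: (mulfI x0); rewrite -exprS prednK ?hx ?mulr1 //; by move: m2; case: (m).
  case/dvdnP: dt => t ht.
  by rewrite -(prednK (ltnW n1)) exprS nm1 ht mulnC exprM hx1 expr1n mulr1.
have m1 : (1 < m.-1)%N by move: m2; case: (m) => [|[|[|]]].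
have dG : (pdiv m.-1 %| #|[set: {unit F}]%G|)%N.
  by apply: (dvdn_trans (pdiv_dvd _)); rewrite card_finField_unit hq.
have [u _ ou] := @Cauchy _ _ [set: {unit F}]%G (pdiv_prime m1) dG.
set w := FinRing.uval u.
have wm1 : w ^+ m.-1 = 1.
  case/dvdnP: (pdiv_dvd m.-1) => t ->.
  rewrite mulnC exprM /w -FinRing.val_unitX -ou expg_order.
exact: expr1n.
have w1 : w != 1.
  apply/eqP => hw.
  have u1 : u = 1%g by apply: val_inj; exact: hw.
  move: ou; rewrite u1 order1 => h.
  by have := pdiv_prime m1; rewrite -h.
have w0 : w != 0.
  apply/eqP => hw; move: wm1; rewrite hw expr0n gtn_eqF ?(ltnW m1) //.
  by move/eqP; rewrite eq_sym oner_eq0.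
have wA : w \in A.
  rewrite inE -(prednK (ltnW (ltnW m2))) exprS wm1 mulr1 //.
have zA : (0 : F) \in A by rewrite inE expr0n; move: m2; case: (m).
have zB : (0 : F) \in B by rewrite inE expr0n; move: n1; case: (n).
have oA : (1 : F) \in A by rewrite inE expr1n.
set D := setX A B.
set E := (w, 1) |: ((fun b => (0 : F, b)) @: (A :\ 0)).
have ED : E \subset D.
  apply/subsetP => [[a b]] /setU1P[[-> ->]|].
    by rewrite in_setX wA (subsetP AB).
  case/imsetP => c /setD1P[_ cA] [-> ->].
  by rewrite in_setX zA (subsetP AB).
have cE : #|E| = #|A|.
  rewrite cardsU1 card_imset; last by move=> x y [].
  have -> : (w, 1) \notin (fun b => (0 : F, b)) @: (A :\ 0).
    by apply/imsetP => -[c _ [h _]]; move: w0; rewrite h eqxx.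
  by rewrite (cardsD1 0 A) zA.
have SS : sumset A B \subset (fun p => p.1 + p.2) @: (D :\: E).
  apply/subsetP => y /imset2P [a b aA bB ->].
  case: (boolP ((a, b) \in E)) => hE; last first.
    by apply/imsetP; exists (a, b) => //; rewrite in_setD hE in_setX aA bB.
  move: hE => /setU1P[[-> ->]|].
    apply/imsetP; exists (1, w); last by rewrite /= addrC.
    rewrite in_setD in_setX oA (subsetP AB) // andbT.
    rewrite /E in_setU1 negb_or andbT; apply/andP; split.
      by apply/eqP => -[h _]; move: w1; rewrite h eqxx.
    by apply/imsetP; case => c _ [h _]; move: (oner_neq0 F); rewrite h eqxx.
  case/imsetP => c /setD1P[c0 cA] [-> ->].
  apply/imsetP; exists (c, 0); last by rewrite /= addr0 add0r.
  rewrite in_setD in_setX cA zB andbT.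
  rewrite /E in_setU1 negb_or ?andbT; apply/andP; split.
    by apply/eqP => -[_ h]; move: (oner_neq0 F); rewrite -h eqxx.
  by apply/imsetP; case => d _ [h _]; move: c0; rewrite h eqxx.
have bound : (#|sumset A B| <= q.-1)%N.
  apply: (leq_trans (subset_leq_card SS)).
  apply: (leq_trans (leq_imset_card _ _)).
  rewrite cardsDS // cardsX cE -{2}(muln1 #|A|) -mulnBr -qm.
  apply: leq_mul; first exact: kpot_card (ltnW m2).
  by rewrite subn1 -!subn1 leq_sub2r // kpot_card.
split => //.
case: (pickP (fun x => x \notin sumset A B)) => [x hx|h]; first by exists x.
exfalso.
have : [set: F] \subset sumset A B.
  by apply/subsetP => x _; move: (h x) => /= /negbFE.
move/subset_leq_card; rewrite cardsT hq => hle.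
have := leq_trans hle bound.
by move: q2; case: (q) => // k _; rewrite ltnn.
Qed.
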